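(* Fix $q\in(0,1]$. For every $d\ge1$, $\bar\sigma_{1,q}^2(2,d)=q/d$, and for fixed $s\in(0,2]$, as $d\to\infty$, $$\bar\sigma_{1,q}^2(s,d)=\frac qd+\frac{(3-q)(2-s)}{4d^2}+o\Big(\frac1{d^2}\Big).$$
   Context: For $q\in(0,1]$, integer $d\ge1$ and $s>0$: $h_d(t)=\binom dtq^t(1-q)^{d-t}$, $I_{1,q}(s,d)=q^{-s}2^{s/2}\sum_{t=1}^dh_d(t)\Gamma(t/2+s/2)/\Gamma(t/2)$, and $\bar\sigma_{1,q}(s,d)=I_{1,q}(s,d)^{-1/s}$. (This is the critical weight standard deviation preserving $\mathbb E\|x^{(k)}\|^s$ for the zero-bias width-$d$ linear network $x^{(k+1)}=(W^{(k+1)}x^{(k)})\odot\varepsilon^{(k+1)}$ with i.i.d. $\mathcal N(0,\sigma^2)$ weights and dropout vectors with i.i.d. components equal to $0$ w.p. $1-q$ and $1/q$ w.p. $q$.) *)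

(* Defs.v *)
From Stdlib Require Import Reals.
From Coquelicot Require Import Coquelicot.
Open Scope R_scope.

Definition Gamma (x : R) : R :=
  RInt_gen (fun t => Rpower t (x - 1) * exp (- t))
           (at_right 0) (Rbar_locally p_infty).

Definition h (q : R) (d t : nat) : R :=
  Binomial.C d t * q ^ t * (1 - q) ^ (d - t).

(* I_{1,q}(s,d) = q^{-s} 2^{s/2} sum_{t=1}^d h_d(t) Gamma(t/2+s/2)/Gamma(t/2);
   the sum over t = 1..d is written as sum_{i=0}^{d-1} with t = i+1. *)
Definition I1q (q s : R) (d : nat) : R :=
  Rpower q (- s) * Rpower 2 (s / 2) *
  sum_f_R0 (fun i => h q d (S i) *
              Gamma (INR (S i) / 2 + s / 2) / Gamma (INR (S i) / 2)) (d - 1).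

Definition sigma_bar (q s : R) (d : nat) : R := Rpower (I1q q s d) (- (1 / s)).

(* Main.v *)
Require Import Defs.
From Stdlib Require Import Reals Lra Psatz Lia Classical FunctionalExtensionality.
From Stdlib Require Import ssreflect.
From Coquelicot Require Import Coquelicot.
Open Scope R_scope.


Lemma rp_pos x p : 0 < Rpower x p.
Proof. unfold Rpower; apply exp_pos. Qed.

Lemma rp_derive p y : 0 < y -> is_derive (fun z => Rpower z p) y (p * Rpower y (p - 1)).
Proof. intros Hy; apply is_derive_Reals; apply derivable_pt_lim_power; auto. Qed.

Lemma rp_cont p y : 0 < y -> continuous (fun z => Rpower z p) y.
Proof. intros Hy; apply: ex_derive_continuous; eexists; apply rp_derive; auto. Qed.

Lemma rp_plus1 y p : 0 < y -> Rpower y (p + 1) = Rpower y p * y.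
Proof. intros; rewrite Rpower_plus Rpower_1; auto. Qed.

Lemma rp_one p : Rpower 1 p = 1.
Proof. unfold Rpower; rewrite ln_1 Rmult_0_r exp_0; auto. Qed.

Lemma rp_le_base_pos a b p : 0 <= p -> 0 < a <= b -> Rpower a p <= Rpower b p.
Proof. intros; apply Rle_Rpower_l; auto. Qed.

Lemma rp_le_base_neg a b p : p <= 0 -> 0 < a <= b -> Rpower b p <= Rpower a p.
Proof.
  intros Hp Hab. replace p with (- (- p)) by ring. rewrite (Rpower_Ropp b (-p)) (Rpower_Ropp a (-p)).
  apply Rinv_le_contravar. apply rp_pos. apply Rle_Rpower_l; lra.
Qed.

Lemma rp_mult_distr x y p : 0 < x -> 0 < y -> Rpower (x * y) p = Rpower x p * Rpower y p.
Proof. intros; rewrite Rpower_mult_distr; auto. Qed.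

Lemma rp_div x y p : 0 < x -> 0 < y -> Rpower (x / y) p = Rpower x p / Rpower y p.
Proof.
  intros; unfold Rdiv. rewrite rp_mult_distr; auto. 2: apply Rinv_0_lt_compat; auto.
  f_equal. unfold Rpower. rewrite ln_Rinv; auto. rewrite -exp_Ropp. f_equal; ring.
Qed.

Lemma rp_le1 y p : 0 < y <= 1 -> 0 <= p -> Rpower y p <= 1.
Proof. intros; rewrite -(rp_one p); apply rp_le_base_pos; lra. Qed.

Lemma rp_le1' y p : 1 <= y -> p <= 0 -> Rpower y p <= 1.
Proof. intros; rewrite -(rp_one p); apply rp_le_base_neg; lra. Qed.

Lemma rp_ge1 y p : 1 <= y -> 0 <= p -> 1 <= Rpower y p.
Proof. intros; rewrite -(rp_one p); apply rp_le_base_pos; lra. Qed.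

Lemma rp2_le p : p <= 2 -> Rpower 2 p <= 4.
Proof.
  intros Hp. apply Rle_trans with (Rpower 2 2).
  apply Rle_Rpower; lra. replace 2 with (INR 2) at 2 by (simpl; ring).
  rewrite Rpower_pow; lra.
Qed.

Lemma taylor1 (lo : R) (f f1 : R -> R) (M x y : R) :
  (forall t, lo <= t -> is_derive f t (f1 t)) ->
  (forall t, lo <= t -> Rabs (f1 t) <= M) ->
  lo <= x -> lo <= y ->
  Rabs (f y - f x) <= M * Rabs (y - x).
Proof.
  intros Hd Hb Hx Hy.
  destruct (MVT_gen f x y f1) as [c [Hc Heq]].
  - intros z Hz. apply Hd. destruct Hz as [Hz _].
    apply Rle_trans with (Rmin x y). apply Rmin_glb; auto. lra.
  - intros z Hz. apply continuity_pt_filterlim.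
    apply: ex_derive_continuous. eexists; apply Hd. destruct Hz as [Hz _].
    apply Rle_trans with (Rmin x y); auto. apply Rmin_glb; auto.
  - rewrite Heq Rabs_mult. apply Rmult_le_compat_r. apply Rabs_pos.
    apply Hb. destruct Hc as [Hc _].
    apply Rle_trans with (Rmin x y); auto. apply Rmin_glb; auto.
Qed.

Lemma between_bound lo x y c : lo <= x -> lo <= y -> Rmin x y <= c <= Rmax x y ->
  lo <= c /\ Rabs (c - x) <= Rabs (y - x).
Proof.
  intros Hx Hy [H1 H2]. unfold Rmin, Rmax in *.
  destruct (Rle_dec x y); split; try lra;
  unfold Rabs; repeat destruct Rcase_abs; lra.
Qed.

Lemma taylor2 (lo : R) (f f1 f2 : R -> R) (M x y : R) :
  (forall t, lo <= t -> is_derive f t (f1 t)) ->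
  (forall t, lo <= t -> is_derive f1 t (f2 t)) ->
  (forall t, lo <= t -> Rabs (f2 t) <= M) ->
  lo <= x -> lo <= y ->
  Rabs (f y - f x - f1 x * (y - x)) <= M * (y - x) ^ 2.
Proof.
  intros Hd1 Hd2 Hb Hx Hy.
  assert (HM : 0 <= M). { apply Rle_trans with (Rabs (f2 x)). apply Rabs_pos. auto. }
  set (g := fun t => f t - f1 x * t).
  assert (Hg : forall t, lo <= t -> is_derive g t (f1 t - f1 x)).
  { intros t Ht. unfold g. replace (f1 t - f1 x) with (f1 t - f1 x * 1) by ring.
    apply: is_derive_minus. auto. apply: is_derive_scal. apply: is_derive_id. }
  destruct (MVT_gen g x y (fun t => f1 t - f1 x)) as [c [Hc Heq]].
  - intros z Hz. apply Hg. destruct Hz as [Hz _].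
    apply Rle_trans with (Rmin x y). apply Rmin_glb; auto. lra.
  - intros z Hz. apply continuity_pt_filterlim.
    apply: ex_derive_continuous. eexists; apply Hg. destruct Hz as [Hz _].
    apply Rle_trans with (Rmin x y); auto. apply Rmin_glb; auto.
  - unfold g in Heq; cbv beta in Heq.
    replace (f y - f x - f1 x * (y - x)) with ((f1 c - f1 x) * (y - x)) by lra.
    destruct (between_bound lo x y c Hx Hy Hc) as [Hc1 Hc2].
    have H1 := taylor1 lo f1 f2 M x c Hd2 Hb Hx Hc1.
    rewrite Rabs_mult. replace ((y-x)^2) with (Rabs (y-x) * Rabs (y-x)) by (rewrite -pow2_abs; ring).
    replace (M * (Rabs (y - x) * Rabs (y - x))) with ((M * Rabs (y - x)) * Rabs (y - x)) by ring.
    apply Rmult_le_compat_r. apply Rabs_pos.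
    apply Rle_trans with (M * Rabs (c - x)); auto.
    apply Rmult_le_compat_l; auto.
Qed.

Lemma taylor3 (lo : R) (f f1 f2 f3 : R -> R) (M x y : R) :
  (forall t, lo <= t -> is_derive f t (f1 t)) ->
  (forall t, lo <= t -> is_derive f1 t (f2 t)) ->
  (forall t, lo <= t -> is_derive f2 t (f3 t)) ->
  (forall t, lo <= t -> Rabs (f3 t) <= M) ->
  lo <= x -> lo <= y ->
  Rabs (f y - f x - f1 x * (y - x) - f2 x / 2 * (y - x) ^ 2) <= M * Rabs (y - x) ^ 3.
Proof.
  intros Hd1 Hd2 Hd3 Hb Hx Hy.
  assert (HM : 0 <= M). { apply Rle_trans with (Rabs (f3 x)). apply Rabs_pos. auto. }
  set (g := fun t => f t - f1 x * t - f2 x / 2 * (t - x) ^ 2).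
  assert (Hg : forall t, lo <= t -> is_derive g t (f1 t - f1 x - f2 x * (t - x))).
  { intros t Ht. unfold g.
    auto_derive. exists (f1 t). apply Hd1; auto. rewrite (is_derive_unique _ _ _ (Hd1 t Ht)). change (1 * f1 t + - (f1 x * 1) + - (f2 x / 2 * (1 * ((1 + 1) * ((t + - x) * 1)))) = f1 t - f1 x - f2 x * (t - x))%R; field. }
  destruct (MVT_gen g x y (fun t => f1 t - f1 x - f2 x * (t - x))) as [c [Hc Heq]].
  - intros z Hz. apply Hg. destruct Hz as [Hz _].
    apply Rle_trans with (Rmin x y). apply Rmin_glb; auto. lra.
  - intros z Hz. apply continuity_pt_filterlim.
    apply: ex_derive_continuous. eexists; apply Hg. destruct Hz as [Hz _].
    apply Rle_trans with (Rmin x y); auto. apply Rmin_glb; auto.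
  - unfold g in Heq.
    replace (f y - f x - f1 x * (y - x) - f2 x / 2 * (y - x) ^ 2)
      with ((f1 c - f1 x - f2 x * (c - x)) * (y - x)) by (cbv beta in Heq; rewrite -Heq; unfold Rdiv; ring_simplify; ring).
    destruct (between_bound lo x y c Hx Hy Hc) as [Hc1 Hc2].
    have H1 := taylor2 lo f1 f2 f3 M x c Hd2 Hd3 Hb Hx Hc1.
    rewrite Rabs_mult.
    apply Rle_trans with (M * (c - x) ^ 2 * Rabs (y - x)).
    apply Rmult_le_compat_r. apply Rabs_pos. auto.
    replace ((c-x)^2) with (Rabs (c-x) * Rabs (c-x)) by (rewrite -pow2_abs; ring).
    assert (0 <= Rabs (c - x)) by apply Rabs_pos.
    assert (Rabs (c-x) * Rabs (c-x) <= Rabs (y-x) * Rabs (y-x)).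
    { apply Rmult_le_compat; auto. }
    simpl. replace (M * (Rabs (c - x) * Rabs (c - x)) * Rabs (y - x)) with
      (M * ((Rabs (c - x) * Rabs (c - x)) * Rabs (y - x))) by ring.
    apply Rmult_le_compat_l; auto.
    replace (Rabs (y - x) * (Rabs (y - x) * (Rabs (y - x) * 1))) with
      ((Rabs (y - x) * Rabs (y - x)) * Rabs (y - x)) by ring.
    apply Rmult_le_compat_r. apply Rabs_pos. auto.
Qed.


Lemma rp_half p : Rpower (/2) p = Rpower 2 (- p).
Proof. unfold Rpower. rewrite ln_Rinv; try lra. f_equal; ring. Qed.

Lemma rp2_le3 p : p <= 3 -> Rpower 2 p <= 8.
Proof.
  intros Hp. apply Rle_trans with (Rpower 2 3).
  apply Rle_Rpower; lra. replace 3 with (INR 3) by (simpl; ring).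
  rewrite Rpower_pow; lra.
Qed.

Lemma rp_derive_scal c p t : 0 < t ->
  is_derive (fun z => c * Rpower z p) t (c * p * Rpower t (p - 1)).
Proof.
  intros Ht. rewrite Rmult_assoc. apply: is_derive_scal. apply rp_derive; auto.
Qed.

Lemma rp_half_bound t p : /2 <= t -> p <= 0 -> Rpower t p <= Rpower 2 (- p).
Proof.
  intros Ht Hp. rewrite -rp_half. apply rp_le_base_neg; lra.
Qed.

Lemma amgm3 e z : 0 < e -> 2 * Rabs z ^ 3 <= e * z ^ 2 + z ^ 4 / e.
Proof.
  intros He. set (w := Rabs z). assert (Hw : 0 <= w) by apply Rabs_pos.
  replace (z ^ 2) with (w ^ 2) by (unfold w; rewrite pow2_abs; auto).
  replace (z ^ 4) with ((w ^ 2) ^ 2) by (unfold w; rewrite pow2_abs; ring).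
  apply Rmult_le_reg_r with e; auto.
  replace ((e * w ^ 2 + (w ^ 2) ^ 2 / e) * e) with (e * e * w ^ 2 + (w^2)^2) by (field; lra).
  have := pow2_ge_0 (w * (e - w)). intros; nra.
Qed.

Lemma pow_taylor3 a u : 0 < a <= 1 -> 0 < u ->
  Rabs (Rpower u a - (1 + a * (u - 1) + a * (a - 1) / 2 * (u - 1) ^ 2))
  <= 16 * Rabs (u - 1) ^ 3.
Proof.
  intros Ha Hu. destruct (Rle_dec (/2) u) as [Hu2|Hu2].
  - have H := taylor3 (/2) (fun z => Rpower z a) (fun z => a * Rpower z (a - 1))
      (fun z => a * (a - 1) * Rpower z (a - 1 - 1))
      (fun z => a * (a - 1) * (a - 1 - 1) * Rpower z (a - 1 - 1 - 1)) 16 1 u.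
    rewrite !rp_one in H.
    replace (Rpower u a - (1 + a * (u - 1) + a * (a - 1) / 2 * (u - 1) ^ 2)) with
      (Rpower u a - 1 - a * 1 * (u - 1) - a * (a - 1) * 1 / 2 * (u - 1) ^ 2) by field.
    apply H; try lra.
    + intros t Ht. apply rp_derive; lra.
    + intros t Ht. apply rp_derive_scal; lra.
    + intros t Ht. apply rp_derive_scal; lra.
    + intros t Ht. rewrite Rabs_mult.
      assert (Rabs (a * (a - 1) * (a - 1 - 1)) <= 2).
      { assert (0 <= (1 - a) * (2 - a) <= 2) by nra.
        replace (a * (a - 1) * (a - 1 - 1)) with (a * ((1 - a) * (2 - a))) by ring.
        rewrite Rabs_pos_eq; nra. }
      assert (0 < Rpower t (a - 1 - 1 - 1)) by apply rp_pos.
      rewrite (Rabs_pos_eq (Rpower _ _)); try lra.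
      have := rp_half_bound t (a - 1 - 1 - 1) Ht ltac:(lra).
      have := rp2_le3 (- (a - 1 - 1 - 1)) ltac:(lra).
      intros; nra.
  - assert (0 < Rpower u a <= 1).
    { split. apply rp_pos. apply rp_le1; lra. }
    assert (Rabs (u - 1) = 1 - u) by (rewrite Rabs_left; lra).
    rewrite H0. set (v := u - 1).
    assert (0 <= 1 + a * v + a * (a - 1) / 2 * v ^ 2 <= 1).
    { assert (-1 < v < - / 2) by (unfold v; lra).
      assert (a * (a - 1) <= 0) by nra.
      assert (0 <= v ^ 2 <= 1) by nra.
      assert (a * v <= 0) by nra.
      assert (-a <= a * v) by nra.
      assert (a * (a - 1) / 2 * v ^ 2 <= 0) by (apply Rmult_le_0_r; nra).
      assert (a * (a - 1) / 2 <= a * (a - 1) / 2 * v ^ 2) by nra.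
      split; nra. }
    apply Rabs_le. split; nra.
Qed.

Lemma pow_taylor3' a u e : 0 < a <= 1 -> 0 < u -> 0 < e ->
  Rabs (Rpower u a - (1 + a * (u - 1) + a * (a - 1) / 2 * (u - 1) ^ 2))
  <= 8 * (e * (u - 1) ^ 2 + (u - 1) ^ 4 / e).
Proof.
  intros. eapply Rle_trans. apply pow_taylor3; auto.
  have := amgm3 e (u - 1) H1. lra.
Qed.

Lemma pow_taylor1m a w : 0 < a <= 1 -> /2 <= w ->
  Rabs (Rpower w (a - 1) - 1) <= 4 * Rabs (w - 1).
Proof.
  intros Ha Hw.
  have H := taylor1 (/2) (fun z => Rpower z (a - 1)) (fun z => (a - 1) * Rpower z (a - 1 - 1)) 4 1 w.
  rewrite rp_one in H. apply H; try lra.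
  - intros t Ht. apply rp_derive; lra.
  - intros t Ht. rewrite Rabs_mult.
    assert (0 < Rpower t (a - 1 - 1)) by apply rp_pos.
    rewrite (Rabs_pos_eq (Rpower _ _)); try lra.
    have := rp_half_bound t (a - 1 - 1) Ht ltac:(lra).
    have := rp2_le (- (a - 1 - 1)) ltac:(lra).
    rewrite Rabs_left1; try lra. intros; nra.
Qed.

Lemma pow_bound32 a w : 0 < a <= 1 -> /2 <= w -> Rpower w (a - 3/2) <= 4.
Proof.
  intros. eapply Rle_trans. apply rp_half_bound; auto. lra.
  apply rp2_le; lra.
Qed.


Definition W (x y : R) : R := Rpower y (x - 1) * exp (- y).

Lemma W_pos x y : 0 < W x y.
Proof. unfold W. apply Rmult_lt_0_compat. apply rp_pos. apply exp_pos. Qed.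

Lemma exp_cont y : continuous exp y.
Proof. apply: ex_derive_continuous. auto_derive. auto. Qed.

Lemma W_cont x y : 0 < y -> continuous (W x) y.
Proof.
  intros Hy. unfold W.
  apply (continuous_mult (fun z => Rpower z (x - 1)) (fun z => exp (- z))).
  apply rp_cont; auto.
  apply: ex_derive_continuous. auto_derive. auto.
Qed.

Lemma W_ex_RInt x a b : 0 < a -> 0 < b -> ex_RInt (W x) a b.
Proof.
  intros Ha Hb. apply: ex_RInt_continuous. intros z Hz. apply W_cont.
  destruct Hz as [Hz _]. apply Rlt_le_trans with (Rmin a b); auto.
  unfold Rmin; destruct Rle_dec; auto.
Qed.

Lemma pow_le_fact_exp y n : 0 <= y -> y ^ n <= INR (Factorial.fact n) * exp y.
Proof.
  intros Hy. have H := exp_ge_taylor y n Hy.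
  assert (y ^ n / INR (Factorial.fact n) <= sum_f_R0 (fun k => y ^ k / INR (Factorial.fact k)) n).
  { destruct n. simpl. lra.
    rewrite tech5. assert (0 <= sum_f_R0 (fun k : nat => y ^ k / INR (Factorial.fact k)) n).
    apply cond_pos_sum. intros k. apply Rdiv_le_0_compat. apply pow_le; auto. apply INR_fact_lt_0.
    lra. }
  have := INR_fact_lt_0 n. intros Hf.
  apply Rmult_le_reg_r with (/ INR (Factorial.fact n)). apply Rinv_0_lt_compat; auto.
  replace (INR (Factorial.fact n) * exp y * / INR (Factorial.fact n)) with (exp y) by (field; lra).
  unfold Rdiv in H0. lra.
Qed.

Lemma W_bound_inf x : exists K, 0 < K /\ forall y, 1 <= y -> W x y <= K / y ^ 2.
Proof.
  destruct (INR_unbounded (x - 1)) as [N HN].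
  exists (INR (Factorial.fact (N + 2))). split. apply INR_fact_lt_0.
  intros y Hy. unfold W.
  assert (Rpower y (x - 1) <= y ^ N).
  { rewrite -Rpower_pow; try lra. apply Rle_Rpower; lra. }
  have H2 := pow_le_fact_exp y (N + 2) ltac:(lra).
  rewrite pow_add in H2.
  assert (0 < y ^ 2) by (apply pow_lt; lra).
  assert (0 < y ^ N) by (apply pow_lt; lra).
  rewrite exp_Ropp.
  have := exp_pos y. intros He.
  apply Rle_trans with (y ^ N * / exp y).
  apply Rmult_le_compat_r. left; apply Rinv_0_lt_compat; auto. auto.
  apply Rmult_le_reg_r with (exp y * y ^ 2). nra.
  replace (y ^ N * / exp y * (exp y * y ^ 2)) with (y ^ N * y ^ 2) by (field; lra).
  replace (INR (Factorial.fact (N + 2)) / y ^ 2 * (exp y * y ^ 2)) with (INR (Factorial.fact (N + 2)) * exp y) by (field; lra).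
  auto.
Qed.

Lemma mono_lim (F : R -> R) (c K : R) :
  (forall b b', c <= b <= b' -> F b <= F b') ->
  (forall b, c <= b -> F b <= K) ->
  exists L, (forall b, c <= b -> F b <= L) /\
    forall eps, 0 < eps -> exists B, c <= B /\ forall b, B <= b -> L - eps < F b.
Proof.
  intros Hm Hb.
  set (E := fun r => exists b, c <= b /\ r = F b).
  assert (HE1 : bound E). { exists K. intros r [b [Hb1 ->]]. auto. }
  assert (HE2 : exists r, E r). { exists (F c). exists c. split; auto; lra. }
  destruct (completeness E HE1 HE2) as [L [HL1 HL2]].
  exists L. split.
  - intros b Hb'. apply HL1. exists b; auto.
  - intros eps Heps. apply NNPP. intros Hn.
    assert (is_upper_bound E (L - eps)).
    { intros r [b [Hb1 ->]]. destruct (Rle_dec (F b) (L - eps)) as [|Hf]; auto.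
      exfalso. apply Hn. exists b. split; auto. intros b' Hb'.
      have := Hm b b' ltac:(lra). lra. }
    have := HL2 _ H. lra.
Qed.

Lemma ball_R (l e v : R) : Rabs (v - l) < e -> ball l e v.
Proof. intros H. apply H. Qed.

Lemma is_RInt_gen_right (f : R -> R) c L :
  (forall b, c <= b -> ex_RInt f c b) ->
  (forall eps, 0 < eps -> exists B, c <= B /\ forall b, B <= b -> Rabs (RInt f c b - L) < eps) ->
  is_RInt_gen f (at_point c) (Rbar_locally p_infty) L.
Proof.
  intros Hex Hlim. unfold is_RInt_gen.
  apply filterlimi_lim_ext_loc with (f := fun ab => RInt f (fst ab) (snd ab)).
  - apply Filter_prod with (fun a => a = c) (fun b => c < b).
    reflexivity. exists c. auto.
    intros a b -> Hb. simpl. apply (RInt_correct (V := R_CompleteNormedModule)). apply Hex. lra.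
  - apply filterlim_locally. intros eps.
    destruct (Hlim eps (cond_pos eps)) as [B [HB1 HB2]].
    apply Filter_prod with (fun a => a = c) (fun b => B < b).
    reflexivity. exists B. auto.
    intros a b -> Hb. apply ball_R. simpl. apply HB2. lra.
Qed.

Lemma is_RInt_gen_left (f : R -> R) c L :
  0 < c ->
  (forall a, 0 < a <= c -> ex_RInt f a c) ->
  (forall eps, 0 < eps -> exists B, 0 < B /\ forall a, 0 < a <= B -> Rabs (RInt f a c - L) < eps) ->
  is_RInt_gen f (at_right 0) (at_point c) L.
Proof.
  intros Hc Hex Hlim. unfold is_RInt_gen.
  apply filterlimi_lim_ext_loc with (f := fun ab => RInt f (fst ab) (snd ab)).
  - apply Filter_prod with (fun a => 0 < a < c) (fun b => b = c).
    exists (mkposreal c Hc). intros y Hy Hy0. split; auto.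
    unfold ball in Hy; simpl in Hy; unfold AbsRing_ball, abs, minus, plus, opp in Hy; simpl in Hy.
    rewrite Ropp_0 Rplus_0_r in Hy. have := Rle_abs y. lra.
    reflexivity.
    intros a b Ha ->. simpl. apply (RInt_correct (V := R_CompleteNormedModule)). apply Hex. lra.
  - apply filterlim_locally. intros eps.
    destruct (Hlim eps (cond_pos eps)) as [B [HB1 HB2]].
    apply Filter_prod with (fun a => 0 < a < B) (fun b => b = c).
    exists (mkposreal B HB1). intros y Hy Hy0. split; auto.
    unfold ball in Hy; simpl in Hy; unfold AbsRing_ball, abs, minus, plus, opp in Hy; simpl in Hy.
    rewrite Ropp_0 Rplus_0_r in Hy. have := Rle_abs y. lra.
    reflexivity.
    intros a b Ha ->. apply ball_R. simpl. apply HB2. lra.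
Qed.


Lemma RInt_W_nonneg x a b : 0 < a <= b -> 0 <= RInt (W x) a b.
Proof.
  intros H. apply RInt_ge_0. lra. apply W_ex_RInt; lra.
  intros; left; apply W_pos.
Qed.

Lemma RInt_W_chasles x a b c : 0 < a -> 0 < b -> 0 < c ->
  RInt (W x) a b + RInt (W x) b c = RInt (W x) a c.
Proof.
  intros. have := RInt_Chasles (V := R_CompleteNormedModule) (W x) a b c
    (W_ex_RInt x a b H H0) (W_ex_RInt x b c H0 H1). auto.
Qed.

Lemma RInt_inv_sq K b : 1 <= b -> is_RInt (fun y => K / y ^ 2) 1 b (K - K / b).
Proof.
  intros Hb.
  have H := is_RInt_derive (V := R_CompleteNormedModule) (fun y => - K / y) (fun y => K / y ^ 2) 1 b.
  replace (K - K / b) with (minus (- K / b) (- K / 1)).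
  apply H.
  - intros y Hy. assert (0 < y). { destruct Hy as [Hy _]. apply Rlt_le_trans with (Rmin 1 b); auto.
      unfold Rmin; destruct Rle_dec; lra. }
    auto_derive. lra. simpl. field; lra.
  - intros y Hy. assert (0 < y). { destruct Hy as [Hy _]. apply Rlt_le_trans with (Rmin 1 b); auto.
      unfold Rmin; destruct Rle_dec; lra. }
    apply: ex_derive_continuous. auto_derive. nra.
  - rewrite /minus /plus /opp /=. field. lra.
Qed.

Lemma RInt_pow_0 x a : 0 < x -> 0 < a <= 1 ->
  is_RInt (fun y => Rpower y (x - 1)) a 1 ((1 - Rpower a x) / x).
Proof.
  intros Hx Ha.
  have H := is_RInt_derive (V := R_CompleteNormedModule) (fun y => / x * Rpower y x) (fun y => Rpower y (x - 1)) a 1.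
  replace ((1 - Rpower a x) / x) with (minus (/ x * Rpower 1 x) (/ x * Rpower a x)).
  apply H.
  - intros y Hy. assert (0 < y). { destruct Hy as [Hy _]. apply Rlt_le_trans with (Rmin a 1); auto.
      unfold Rmin; destruct Rle_dec; lra. }
    replace (Rpower y (x - 1)) with (/ x * (x * Rpower y (x - 1))) by (field; lra).
    apply: is_derive_scal. apply rp_derive; auto.
  - intros y Hy. assert (0 < y). { destruct Hy as [Hy _]. apply Rlt_le_trans with (Rmin a 1); auto.
      unfold Rmin; destruct Rle_dec; lra. }
    apply rp_cont; auto.
  - rewrite rp_one /minus /plus /opp /=. field. lra.
Qed.

Lemma Gamma_exists x : 0 < x ->
  is_RInt_gen (W x) (at_right 0) (Rbar_locally p_infty) (Gamma x) /\ 0 < Gamma x.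
Proof.
  intros Hx.
  destruct (W_bound_inf x) as [K [HK HKb]].
  destruct (mono_lim (fun b => RInt (W x) 1 b) 1 K) as [L2 [HL2a HL2b]].
  { intros b b' Hb. rewrite -(RInt_W_chasles x 1 b b'); try lra.
    have := RInt_W_nonneg x b b' ltac:(lra). lra. }
  { intros b Hb. apply Rle_trans with (RInt (fun y => K / y ^ 2) 1 b).
    apply RInt_le; auto. apply W_ex_RInt; lra. eexists; apply RInt_inv_sq; auto.
    intros y Hy. apply HKb; lra.
    rewrite (is_RInt_unique _ _ _ _ (RInt_inv_sq K b Hb)).
    assert (0 < K / b) by (apply Rdiv_lt_0_compat; lra). lra. }
  destruct (mono_lim (fun t => RInt (W x) (/ t) 1) 1 (/ x)) as [L1 [HL1a HL1b]].
  { intros t t' Ht. assert (0 < / t') by (apply Rinv_0_lt_compat; lra).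
    assert (/ t' <= / t) by (apply Rinv_le_contravar; lra).
    rewrite -(RInt_W_chasles x (/ t') (/ t) 1); try lra.
    have := RInt_W_nonneg x (/ t') (/ t) ltac:(lra). lra. }
  { intros t Ht. assert (0 < / t) by (apply Rinv_0_lt_compat; lra).
    assert (/ t <= 1). { rewrite -Rinv_1. apply Rinv_le_contravar; lra. }
    apply Rle_trans with (RInt (fun y => Rpower y (x - 1)) (/ t) 1).
    apply RInt_le; auto. apply W_ex_RInt; lra. eexists; apply RInt_pow_0; auto.
    intros y Hy. unfold W. have := rp_pos y (x - 1). intros.
    assert (exp (- y) <= 1). { rewrite -exp_0. left; apply exp_increasing. lra. }
    nra.
    rewrite (is_RInt_unique _ _ _ _ (RInt_pow_0 x (/ t) Hx ltac:(lra))).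
    have := rp_pos (/ t) x. intros. assert (0 < / x) by (apply Rinv_0_lt_compat; auto). unfold Rdiv. nra. }
  assert (H2 : is_RInt_gen (W x) (at_point 1) (Rbar_locally p_infty) L2).
  { apply is_RInt_gen_right. intros; apply W_ex_RInt; lra.
    intros eps Heps. destruct (HL2b eps Heps) as [B [HB1 HB2]]. exists B. split; auto.
    intros b Hb. have := HB2 b Hb. have := HL2a b ltac:(lra). intros.
    rewrite Rabs_left1; lra. }
  assert (H1 : is_RInt_gen (W x) (at_right 0) (at_point 1) L1).
  { apply is_RInt_gen_left. lra. intros; apply W_ex_RInt; lra.
    intros eps Heps. destruct (HL1b eps Heps) as [B [HB1 HB2]]. exists (/ B). split.
    apply Rinv_0_lt_compat; lra.
    intros a Ha. assert (B <= / a).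
    { rewrite -(Rinv_inv B). apply Rinv_le_contravar; lra. }
    have := HB2 (/ a) H. have := HL1a (/ a) ltac:(lra). rewrite Rinv_inv. intros.
    rewrite Rabs_left1; lra. }
  have H : is_RInt_gen (W x) (at_right 0) (Rbar_locally p_infty) (plus L1 L2) by apply: is_RInt_gen_Chasles H1 H2.
  assert (HG : Gamma x = plus L1 L2).
  { unfold Gamma. apply (is_RInt_gen_unique (V := R_CompleteNormedModule)). exact H. }
  split. rewrite HG; auto.
  rewrite HG /plus /=.
  have := HL2a 2 ltac:(lra). have := HL1a 1 ltac:(lra).
  rewrite Rinv_1 RInt_point /zero /=. intros.
  assert (0 < RInt (W x) 1 2).
  { apply RInt_gt_0. lra. intros; apply W_pos. intros; apply W_cont; lra. }
  lra.
Qed.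


Definition fW (x y : R) : R := - (Rpower y x * exp (- y)).
Definition dfW (x y : R) : R := W (x + 1) y - x * W x y.

Lemma fW_derive x y : 0 < y -> is_derive (fW x) y (dfW x y).
Proof.
  intros Hy. unfold fW, dfW, W.
  replace (x + 1 - 1) with x by ring.
  have H1 := rp_derive x y Hy.
  have H2 : is_derive (fun z => exp (- z)) y (- exp (- y)).
  { auto_derive. auto. simpl. ring. }
  have H3 := is_derive_mult _ _ _ _ _ H1 H2 ltac:(intros; apply Rmult_comm).
  have H4 := is_derive_opp _ _ _ H3.
  replace (Rpower y x * exp (- y) - x * (Rpower y (x - 1) * exp (- y))) with
    (opp (plus (mult (x * Rpower y (x - 1)) (exp (- y))) (mult (Rpower y x) (- exp (- y))))).
  exact H4.
  rewrite /opp /plus /mult /=. ring.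
Qed.

Lemma dfW_cont x y : 0 < y -> continuous (dfW x) y.
Proof.
  intros Hy. unfold dfW.
  apply (continuous_plus (fun z => W (x + 1) z) (fun z => opp (x * W x z))).
  apply W_cont; auto.
  apply (continuous_opp (fun z => x * W x z)).
  apply (continuous_scal_r x (W x)). apply W_cont; auto.
Qed.

Lemma locally_pos y : 0 < y -> locally y (fun z => 0 < z).
Proof.
  intros Hy. apply locally_interval with 0 p_infty; simpl; auto.
Qed.

Lemma Gamma_succ x : 0 < x -> Gamma (x + 1) = x * Gamma x.
Proof.
  intros Hx.
  destruct (Gamma_exists x Hx) as [G0 _].
  destruct (Gamma_exists (x + 1) ltac:(lra)) as [G1 _].
  destruct (W_bound_inf (x + 1)) as [K [HK HKb]].
  have HD : is_RInt_gen (Derive (fW x)) (at_right 0) (Rbar_locally p_infty) (0 - 0).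
  { apply: is_RInt_gen_Derive.
    - apply Filter_prod with (fun a => 0 < a) (fun b => 0 < b).
      exists (mkposreal 1 Rlt_0_1). intros; auto. exists 0. auto.
      intros a b Ha Hb z Hz. exists (dfW x z). apply fW_derive.
      destruct Hz as [Hz _]. apply Rlt_le_trans with (Rmin a b); auto.
      unfold Rmin; destruct Rle_dec; auto.
    - apply Filter_prod with (fun a => 0 < a) (fun b => 0 < b).
      exists (mkposreal 1 Rlt_0_1). intros; auto. exists 0. auto.
      intros a b Ha Hb z Hz. simpl in Hz.
      assert (0 < z). { destruct Hz as [Hz _]. apply Rlt_le_trans with (Rmin a b); auto.
        unfold Rmin; destruct Rle_dec; auto. }
      apply continuous_ext_loc with (dfW x).
      { apply: filter_imp (locally_pos z H). intros w Hw.
        symmetry. apply is_derive_unique. apply fW_derive; auto. }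
      apply dfW_cont; auto.
    - apply filterlim_locally. intros eps.
      assert (0 < Rpower eps (/ x)) by apply rp_pos.
      exists (mkposreal _ H). intros y Hy Hy0. apply ball_R. simpl in Hy.
      unfold ball in Hy; simpl in Hy; unfold AbsRing_ball, abs, minus, plus, opp in Hy; simpl in Hy.
      rewrite Ropp_0 Rplus_0_r Rabs_pos_eq in Hy; try lra.
      unfold fW. rewrite Rminus_0_r Rabs_Ropp Rabs_pos_eq.
      2: { apply Rmult_le_pos. left; apply rp_pos. left; apply exp_pos. }
      assert (Rpower y x < eps).
      { replace (pos eps) with (Rpower (Rpower eps (/ x)) x).
        apply Rlt_Rpower_l; auto. rewrite Rpower_mult. replace (/ x * x) with 1 by (field; lra).
        apply Rpower_1. apply cond_pos. }
      assert (exp (- y) <= 1). { rewrite -exp_0. left; apply exp_increasing. lra. }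
      have := rp_pos y x. nra.
    - apply filterlim_locally. intros eps.
      exists (Rmax 1 (K / eps)). intros y Hy. apply ball_R.
      assert (1 < y) by (have := Rmax_l 1 (K / eps); lra).
      assert (K / eps < y) by (have := Rmax_r 1 (K / eps); lra).
      have := HKb y ltac:(lra). unfold W. replace (x + 1 - 1) with x by ring. intros HW.
      unfold fW. rewrite Rminus_0_r Rabs_Ropp Rabs_pos_eq.
      2: { apply Rmult_le_pos. left; apply rp_pos. left; apply exp_pos. }
      apply Rle_lt_trans with (K / y ^ 2); auto.
      have := cond_pos eps. intros He.
      apply Rmult_lt_reg_r with (y ^ 2 * / K). apply Rmult_lt_0_compat. nra. apply Rinv_0_lt_compat; auto.
      replace (K / y ^ 2 * (y ^ 2 * / K)) with 1 by (field; nra).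
      assert (1 < eps * (y * / K)).
      { apply Rmult_lt_reg_r with (K / eps). apply Rdiv_lt_0_compat; auto.
        replace (eps * (y * / K) * (K / eps)) with y by (field; lra). lra. }
      replace (eps * (y ^ 2 * / K)) with (eps * (y * / K) * y) by (simpl; ring). nra. }
  have HD' : is_RInt_gen (fun y => minus (W (x + 1) y) (scal x (W x y))) (at_right 0) (Rbar_locally p_infty) (0 - 0).
  { apply: is_RInt_gen_ext HD.
    apply Filter_prod with (fun a => 0 < a) (fun b => 0 < b).
    exists (mkposreal 1 Rlt_0_1). intros; auto. exists 0. auto.
    intros a b Ha Hb z Hz. simpl in Hz.
    assert (0 < z). { destruct Hz as [Hz _]. apply Rlt_trans with (Rmin a b); auto.
      unfold Rmin; destruct Rle_dec; auto. }
    rewrite (is_derive_unique _ _ _ (fW_derive x z H)). reflexivity. }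
  have HG : is_RInt_gen (fun y => minus (W (x + 1) y) (scal x (W x y))) (at_right 0) (Rbar_locally p_infty)
     (minus (Gamma (x + 1)) (scal x (Gamma x))).
  { apply: is_RInt_gen_minus. exact G1. apply: is_RInt_gen_scal. exact G0. }
  have E1 := @is_RInt_gen_unique R_CompleteNormedModule _ _ _ _ _ _ HD'.
  have E2 := @is_RInt_gen_unique R_CompleteNormedModule _ _ _ _ _ _ HG.
  rewrite E1 in E2. move: E2. rewrite /minus /plus /opp /scal /= /mult /=. intros E2. have E3 : 0 - 0 = Gamma (x+1) + - (x * Gamma x) := E2 ltac:(apply _) ltac:(apply _). lra.
Qed.


Fixpoint poch (x : R) (k : nat) : R :=
  match k with O => 1 | S k => poch x k * (x + INR k) end.

Lemma Gamma_poch x k : 0 < x -> Gamma (x + INR k) = Gamma x * poch x k.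
Proof.
  intros Hx. induction k as [|k IH].
  - rewrite /= Rplus_0_r. ring.
  - rewrite S_INR. change (poch x (S k)) with (poch x k * (x + INR k)). replace (x + (INR k + 1)) with ((x + INR k) + 1) by ring.
    rewrite Gamma_succ; [| have := pos_INR k; lra]. rewrite IH. ring.
Qed.

Lemma W_shift x p y : 0 < y -> W (x + p) y = Rpower y p * W x y.
Proof.
  intros Hy. unfold W. replace (x + p - 1) with (p + (x - 1)) by ring.
  rewrite Rpower_plus. ring.
Qed.

Lemma W_shift_nat x k y : 0 < y -> W (x + INR k) y = y ^ k * W x y.
Proof. intros Hy. rewrite W_shift; auto. rewrite Rpower_pow; auto. Qed.

Definition FA := at_right 0.
Definition FB := Rbar_locally p_infty.

Lemma ext_pos (f g : R -> R) l :
  (forall y, 0 < y -> f y = g y) -> is_RInt_gen f FA FB l -> is_RInt_gen g FA FB l.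
Proof.
  intros Hfg H. apply: is_RInt_gen_ext H.
  apply Filter_prod with (fun a => 0 < a) (fun b => 0 < b).
  exists (mkposreal 1 Rlt_0_1). intros; auto. exists 0. auto.
  intros a b Ha Hb z Hz. simpl in Hz. apply Hfg.
  destruct Hz as [Hz _]. apply Rlt_trans with (Rmin a b); auto.
  unfold Rmin; destruct Rle_dec; auto.
Qed.

Lemma is_RInt_gen_val (f : R -> R) l l' : l = l' -> is_RInt_gen f FA FB l -> is_RInt_gen f FA FB l'.
Proof. intros ->; auto. Qed.

Lemma mom x k : 0 < x -> is_RInt_gen (fun y => y ^ k * W x y) FA FB (Gamma x * poch x k).
Proof.
  intros Hx. rewrite -Gamma_poch; auto.
  destruct (Gamma_exists (x + INR k)) as [H _]. have := pos_INR k. lra.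
  apply: ext_pos H. intros y Hy. apply W_shift_nat; auto.
Qed.

Lemma RIg_plus (f g : R -> R) lf lg : is_RInt_gen f FA FB lf -> is_RInt_gen g FA FB lg ->
  is_RInt_gen (fun y => f y + g y) FA FB (lf + lg).
Proof. intros. apply: is_RInt_gen_plus; eauto. Qed.

Lemma RIg_scal (f : R -> R) c lf : is_RInt_gen f FA FB lf ->
  is_RInt_gen (fun y => c * f y) FA FB (c * lf).
Proof. intros. apply: is_RInt_gen_scal; eauto. Qed.

Lemma RIg_minus (f g : R -> R) lf lg : is_RInt_gen f FA FB lf -> is_RInt_gen g FA FB lg ->
  is_RInt_gen (fun y => f y - g y) FA FB (lf - lg).
Proof. intros. apply: is_RInt_gen_minus; eauto. Qed.

Lemma mom_poly x c0 c1 c2 c3 c4 : 0 < x ->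
  is_RInt_gen (fun y => (c0 + c1 * y + c2 * y ^ 2 + c3 * y ^ 3 + c4 * y ^ 4) * W x y) FA FB
    (Gamma x * (c0 + c1 * x + c2 * (x * (x + 1)) + c3 * (x * (x + 1) * (x + 2))
       + c4 * (x * (x + 1) * (x + 2) * (x + 3)))).
Proof.
  intros Hx.
  have H0 := RIg_scal _ c0 _ (mom x 0 Hx).
  have H1 := RIg_scal _ c1 _ (mom x 1 Hx).
  have H2 := RIg_scal _ c2 _ (mom x 2 Hx).
  have H3 := RIg_scal _ c3 _ (mom x 3 Hx).
  have H4 := RIg_scal _ c4 _ (mom x 4 Hx).
  have H := RIg_plus _ _ _ _ (RIg_plus _ _ _ _ (RIg_plus _ _ _ _ (RIg_plus _ _ _ _ H0 H1) H2) H3) H4.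
  apply: is_RInt_gen_val. 2: apply: ext_pos H.
  simpl. ring.
  intros y Hy. simpl. ring.
Qed.

Lemma RIg_norm (f g : R -> R) lf lg :
  (forall y, 0 < y -> Rabs (f y) <= g y) ->
  is_RInt_gen f FA FB lf -> is_RInt_gen g FA FB lg -> Rabs lf <= lg.
Proof.
  intros Hb Hf Hg.
  apply: (RInt_gen_norm (Fa := FA) (Fb := FB) f g lf lg _ _ Hf Hg).
  - apply Filter_prod with (fun a => 0 < a < 1) (fun b => 1 < b).
    exists (mkposreal 1 Rlt_0_1). intros y Hy Hy0. split; auto.
    unfold ball in Hy; simpl in Hy; unfold AbsRing_ball, abs, minus, plus, opp in Hy; simpl in Hy.
    rewrite Ropp_0 Rplus_0_r in Hy. have := Rle_abs y. lra.
    exists 1. auto. intros a b Ha Hb'. simpl. lra.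
  - apply Filter_prod with (fun a => 0 < a) (fun b => 0 < b).
    exists (mkposreal 1 Rlt_0_1). intros; auto. exists 0. auto.
    intros a b Ha Hb' z Hz. simpl in Hz. apply Hb. lra.
Qed.

Lemma Gamma_ratio_bound x a : /2 <= x -> 0 < a <= 1 ->
  Rabs (Gamma (x + a) - Gamma x * Rpower x a * (1 + a * (a - 1) / (2 * x)))
  <= 128 * Gamma x * Rpower x (a - 3/2).
Proof.
  intros Hx Ha. assert (Hx0 : 0 < x) by lra.
  set (r := Rpower x (/2)).
  assert (Hr : 0 < r) by apply rp_pos.
  assert (Hrx : r * r = x).
  { unfold r. rewrite -Rpower_plus. replace (/2 + /2) with 1 by field. apply Rpower_1; auto. }
  set (P := Rpower x (a - 3/2)).
  assert (HP : 0 < P) by apply rp_pos.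
  assert (HxA : Rpower x a = P * r ^ 3).
  { unfold P, r. simpl. rewrite Rmult_1_r -!Rpower_plus. f_equal. field. }
  set (e := / r).
  assert (He : 0 < e) by (apply Rinv_0_lt_compat; auto).
  set (xa := Rpower x a).
  have Hf : is_RInt_gen (fun y => Rpower y a * W x y
      - (xa * (1 - a + a * (a - 1) / 2) + xa * (a / x - a * (a - 1) / x) * y
         + xa * (a * (a - 1) / 2 / x ^ 2) * y ^ 2 + 0 * y ^ 3 + 0 * y ^ 4) * W x y) FA FB
     (Gamma (x + a) - Gamma x * (xa * (1 - a + a * (a - 1) / 2) + xa * (a / x - a * (a - 1) / x) * x
         + xa * (a * (a - 1) / 2 / x ^ 2) * (x * (x + 1)) + 0 * (x * (x + 1) * (x + 2))
         + 0 * (x * (x + 1) * (x + 2) * (x + 3)))).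
  { apply RIg_minus. destruct (Gamma_exists (x + a)) as [G _]. lra.
    apply: ext_pos G. intros y Hy. apply W_shift; auto.
    apply mom_poly; auto. }
  set (v := fun y => y / x - 1).
  have Hg : is_RInt_gen (fun y =>
      (8 * xa * (e + 1 / e)
       + 8 * xa * (e * (-2 / x) + (-4 / x) / e) * y
       + 8 * xa * (e * (1 / x ^ 2) + (6 / x ^ 2) / e) * y ^ 2
       + 8 * xa * (- 4 / x ^ 3 / e) * y ^ 3 + 8 * xa * (1 / x ^ 4 / e) * y ^ 4) * W x y) FA FB
      (Gamma x * (8 * xa * (e + 1 / e)
       + 8 * xa * (e * (-2 / x) + (-4 / x) / e) * x
       + 8 * xa * (e * (1 / x ^ 2) + (6 / x ^ 2) / e) * (x * (x + 1))
       + 8 * xa * (- 4 / x ^ 3 / e) * (x * (x + 1) * (x + 2)) + 8 * xa * (1 / x ^ 4 / e) * (x * (x + 1) * (x + 2) * (x + 3)))).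
  { apply mom_poly; auto. }
  have Hn := RIg_norm _ _ _ _ _ Hf Hg.
  assert (HG : 0 < Gamma x) by (apply Gamma_exists; auto).
  eapply Rle_trans. 2: eapply Rle_trans. 2: apply Hn.
  - right. f_equal. field. lra.
  - intros y Hy. rewrite -Rmult_minus_distr_r Rabs_mult (Rabs_pos_eq (W x y)). 2: left; apply W_pos.
    apply Rmult_le_compat_r. left; apply W_pos.
    have Hb := pow_taylor3' a (y / x) e Ha ltac:(apply Rdiv_lt_0_compat; lra) He.
    rewrite rp_div in Hb; try lra. fold xa in Hb.
    assert (Hxa : 0 < xa) by apply rp_pos.
    replace (Rpower y a - (xa * (1 - a + a * (a - 1) / 2) + xa * (a / x - a * (a - 1) / x) * y +
      xa * (a * (a - 1) / 2 / x ^ 2) * y ^ 2 + 0 * y ^ 3 + 0 * y ^ 4))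
      with (xa * (Rpower y a / xa - (1 + a * (y / x - 1) + a * (a - 1) / 2 * (y / x - 1) ^ 2))).
    2: { field. split; lra. }
    rewrite Rabs_mult Rabs_pos_eq; try lra.
    replace (8 * xa * (e + 1 / e) + 8 * xa * (e * (-2 / x) + -4 / x / e) * y +
      8 * xa * (e * (1 / x ^ 2) + 6 / x ^ 2 / e) * y ^ 2 + 8 * xa * (-4 / x ^ 3 / e) * y ^ 3 +
      8 * xa * (1 / x ^ 4 / e) * y ^ 4) with (xa * (8 * (e * (y / x - 1) ^ 2 + (y / x - 1) ^ 4 / e))).
    2: { field. split; lra. }
    apply Rmult_le_compat_l; lra.
  -
    apply Rmult_le_reg_r with (/ Gamma x). apply Rinv_0_lt_compat; auto.
    replace (128 * Gamma x * P * / Gamma x) with (128 * P) by (field; lra).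
    unfold xa; rewrite HxA.
    replace (Gamma x * (8 * (P * r ^ 3) * (e + 1 / e) +
       8 * (P * r ^ 3) * (e * (-2 / x) + -4 / x / e) * x +
       8 * (P * r ^ 3) * (e * (1 / x ^ 2) + 6 / x ^ 2 / e) * (x * (x + 1)) +
       8 * (P * r ^ 3) * (-4 / x ^ 3 / e) * (x * (x + 1) * (x + 2)) +
       8 * (P * r ^ 3) * (1 / x ^ 4 / e) * (x * (x + 1) * (x + 2) * (x + 3))) * / Gamma x)
      with (8 * P * (4 + 6 / x)).
    2: { unfold e. rewrite -Hrx. field. rewrite Hrx. split; lra. }
    assert (6 / x <= 12).
    { apply Rmult_le_reg_r with x; auto. replace (6 / x * x) with 6 by (field; lra). lra. }
    nra.
Qed.


Definition Ex (q : R) (d : nat) (f : nat -> R) : R := sum_f_R0 (fun t => h q d t * f t) d.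

Lemma C_n0 n : Binomial.C n 0 = 1.
Proof. unfold Binomial.C. rewrite Nat.sub_0_r. simpl. field. apply INR_fact_neq_0. Qed.

Lemma C_nn n : Binomial.C n n = 1.
Proof. unfold Binomial.C. rewrite Nat.sub_diag. simpl. field. apply INR_fact_neq_0. Qed.

Lemma C_nonneg n k : 0 <= Binomial.C n k.
Proof.
  unfold Binomial.C, Rdiv. apply Rmult_le_pos. left; apply INR_fact_lt_0.
  left; apply Rinv_0_lt_compat. apply Rmult_lt_0_compat; apply INR_fact_lt_0.
Qed.

Lemma h_nonneg q d t : 0 <= q <= 1 -> 0 <= h q d t.
Proof.
  intros Hq. unfold h. apply Rmult_le_pos. apply Rmult_le_pos. apply C_nonneg.
  apply pow_le; lra. apply pow_le; lra.
Qed.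

Lemma h_rec q d t : (t < d)%nat -> h q (S d) (S t) = q * h q d t + (1 - q) * h q d (S t).
Proof.
  intros Ht. unfold h. rewrite -pascal; auto.
  replace (S d - S t)%nat with (d - t)%nat by lia.
  replace (d - t)%nat with (S (d - S t)) by lia. simpl. ring.
Qed.

Lemma h_0 q d : h q (S d) 0 = (1 - q) * h q d 0.
Proof. unfold h. rewrite !C_n0 !Nat.sub_0_r. simpl. ring. Qed.

Lemma h_top q d : h q (S d) (S d) = q * h q d d.
Proof. unfold h. rewrite !C_nn !Nat.sub_diag. simpl. ring. Qed.

Lemma Ex_0 q f : Ex q 0 f = f 0%nat.
Proof. unfold Ex, h. simpl. rewrite C_n0. ring. Qed.

Lemma Ex_rec q d f : Ex q (S d) f = q * Ex q d (fun t => f (S t)) + (1 - q) * Ex q d f.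
Proof.
  unfold Ex. rewrite decomp_sum; [| lia]. simpl pred. rewrite h_0.
  destruct d as [|d].
  - simpl. rewrite h_top. ring.
  - rewrite tech5 h_top.
    rewrite (sum_eq (fun i => h q (S (S d)) (S i) * f (S i))
                    (fun i => q * (h q (S d) i * f (S i)) + (1 - q) * (h q (S d) (S i) * f (S i)))).
    2: { intros i Hi. rewrite h_rec; [| lia]. ring. }
    rewrite plus_sum.
    rewrite (tech5 (fun t => h q (S d) t * f (S t))).
    rewrite (decomp_sum (fun t => h q (S d) t * f t) (S d)); [| lia]. simpl pred.
    rewrite (sum_eq (fun i => q * (h q (S d) i * f (S i))) (fun i => h q (S d) i * f (S i) * q)).
    2: { intros; ring. }
    rewrite (sum_eq (fun i => (1 - q) * (h q (S d) (S i) * f (S i))) (fun i => h q (S d) (S i) * f (S i) * (1 - q))).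
    2: { intros; ring. }
    rewrite -!scal_sum. ring.
Qed.

Lemma Ex_ext q d f g : (forall t, (t <= d)%nat -> f t = g t) -> Ex q d f = Ex q d g.
Proof. intros H. unfold Ex. apply sum_eq. intros i Hi. rewrite H; auto. Qed.

Lemma Ex_plus q d f g : Ex q d (fun t => f t + g t) = Ex q d f + Ex q d g.
Proof. unfold Ex. rewrite -plus_sum. apply sum_eq. intros; ring. Qed.

Lemma Ex_scal q d c f : Ex q d (fun t => c * f t) = c * Ex q d f.
Proof. unfold Ex. rewrite scal_sum. apply sum_eq. intros; ring. Qed.

Lemma Ex_one q d : Ex q d (fun _ => 1) = 1.
Proof.
  induction d as [|d IH]. rewrite Ex_0; auto.
  rewrite Ex_rec IH. ring.
Qed.

Lemma Ex_const q d c : Ex q d (fun _ => c) = c.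
Proof.
  transitivity (c * Ex q d (fun _ => 1)). rewrite -Ex_scal. apply Ex_ext; intros; ring.
  rewrite Ex_one; ring.
Qed.

Lemma Ex_le q d f g : 0 <= q <= 1 -> (forall t, (t <= d)%nat -> f t <= g t) -> Ex q d f <= Ex q d g.
Proof.
  intros Hq H. unfold Ex. apply sum_Rle. intros n Hn. apply Rmult_le_compat_l.
  apply h_nonneg; auto. auto.
Qed.

Lemma Ex_abs q d f g : 0 <= q <= 1 -> (forall t, (t <= d)%nat -> Rabs (f t) <= g t) ->
  Rabs (Ex q d f) <= Ex q d g.
Proof.
  intros Hq H. apply Rabs_le. split.
  - replace (- Ex q d g) with (Ex q d (fun t => -1 * g t)) by (rewrite Ex_scal; ring).
    apply Ex_le; auto. intros t Ht. have := H t Ht. intros Ha. have := Rle_abs (f t). have := Rabs_Ropp (f t). have := Rle_abs (- f t). lra.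
  - apply Ex_le; auto. intros t Ht. have := H t Ht. intros Ha. have := Rle_abs (f t). have := Rabs_Ropp (f t). have := Rle_abs (- f t). lra.
Qed.

Lemma Ex_poly q d (v : nat -> R) c0 c1 c2 c3 c4 :
  Ex q d (fun t => c0 + c1 * v t + c2 * v t ^ 2 + c3 * v t ^ 3 + c4 * v t ^ 4) =
  c0 + c1 * Ex q d v + c2 * Ex q d (fun t => v t ^ 2) + c3 * Ex q d (fun t => v t ^ 3)
  + c4 * Ex q d (fun t => v t ^ 4).
Proof.
  rewrite !Ex_plus !Ex_scal Ex_const. reflexivity.
Qed.

Definition cm (q : R) (d : nat) (t : nat) : R := INR t - INR d * q.

Lemma moments q d :
  Ex q d (cm q d) = 0 /\
  Ex q d (fun t => cm q d t ^ 2) = INR d * q * (1 - q) /\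
  Ex q d (fun t => cm q d t ^ 3) = INR d * q * (1 - q) * (1 - 2 * q) /\
  Ex q d (fun t => cm q d t ^ 4) = INR d * q * (1 - q) * (1 + 3 * (INR d - 2) * q * (1 - q)).
Proof.
  induction d as [|d [I1 [I2 [I3 I4]]]].
  - rewrite !Ex_0 /cm /=. repeat split; ring.
  - assert (HS : forall k, Ex q (S d) (fun t => cm q (S d) t ^ k) =
       q * Ex q d (fun t => (cm q d t + (1 - q)) ^ k) + (1 - q) * Ex q d (fun t => (cm q d t - q) ^ k)).
    { intros k. rewrite Ex_rec. f_equal; f_equal; apply Ex_ext; intros t _;
      unfold cm; rewrite !S_INR; f_equal; ring. }
    assert (P : forall c k, (k <= 4)%nat -> Ex q d (fun t => (cm q d t + c) ^ k) =
      Ex q d (fun t => c ^ k + (INR k * c ^ (k - 1)) * cm q d t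
          + (INR (k * (k - 1) / 2) * c ^ (k - 2)) * cm q d t ^ 2
          + (INR (k * (k - 1) * (k - 2) / 6) * c ^ (k - 3)) * cm q d t ^ 3
          + (if (k =? 4)%nat then 1 else 0) * cm q d t ^ 4)).
    { intros c k Hk. apply Ex_ext. intros t _.
      destruct k as [|[|[|[|[|k]]]]]; simpl; try ring; lia. }
    assert (Q : forall c k, (k <= 4)%nat -> Ex q d (fun t => (cm q d t - c) ^ k) =
       Ex q d (fun t => (cm q d t + (- c)) ^ k)).
    { intros. apply Ex_ext. intros; f_equal. }
    repeat split.
    + replace (cm q (S d)) with (fun t => cm q (S d) t ^ 1) by (apply functional_extensionality; intros; ring).
      rewrite HS Q; [|lia]. rewrite !P; try lia. rewrite !Ex_poly I1 I2 I3 I4. simpl. ring.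
    + rewrite HS Q; [|lia]. rewrite !P; try lia. rewrite !Ex_poly I1 I2 I3 I4 (S_INR d). simpl. ring.
    + rewrite HS Q; [|lia]. rewrite !P; try lia. rewrite !Ex_poly I1 I2 I3 I4 (S_INR d). simpl. ring.
    + rewrite HS Q; [|lia]. rewrite !P; try lia. rewrite !Ex_poly I1 I2 I3 I4 (S_INR d). simpl. ring.
Qed.


Definition rho (a : R) (t : nat) : R :=
  Rpower 2 a * (Gamma (INR t / 2 + a) / Gamma (INR t / 2)).

Lemma rho_bound a t : 0 < a <= 1 -> (1 <= t)%nat ->
  Rabs (rho a t - Rpower (INR t) a - a * (a - 1) * Rpower (INR t) (a - 1))
  <= 512 * Rpower (INR t) (a - 3/2).
Proof.
  intros Ha Ht. set (tau := INR t).
  assert (Htau : 1 <= tau) by (unfold tau; apply (le_INR 1); lia).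
  set (x := tau / 2).
  have Hb := Gamma_ratio_bound x a ltac:(unfold x; lra) Ha.
  assert (HG : 0 < Gamma x) by (apply Gamma_exists; unfold x; lra).
  assert (Hxt : tau = 2 * x) by (unfold x; field).
  assert (E1 : Rpower 2 a * Rpower x a = Rpower tau a).
  { rewrite Hxt rp_mult_distr; auto; unfold x; lra. }
  assert (E2 : Rpower tau (a - 1) = Rpower tau a / tau).
  { replace (a - 1) with (a + -1) by ring. rewrite Rpower_plus Rpower_Ropp Rpower_1; auto. lra. }
  assert (E3 : Rpower 2 a * Rpower x (a - 3/2) = Rpower 2 (3/2) * Rpower tau (a - 3/2)).
  { rewrite Hxt rp_mult_distr; try (unfold x; lra).
    replace (a) with (3/2 + (a - 3/2)) at 1 by ring. rewrite Rpower_plus. ring. }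
  have H4 := rp2_le (3/2) ltac:(lra).
  assert (0 < Rpower tau (a - 3/2)) by apply rp_pos.
  assert (0 < Rpower 2 a) by apply rp_pos.
  unfold rho. fold tau. fold x.
  replace (Rpower 2 a * (Gamma (x + a) / Gamma x) - Rpower tau a - a * (a - 1) * Rpower tau (a - 1))
    with (Rpower 2 a / Gamma x * (Gamma (x + a) - Gamma x * Rpower x a * (1 + a * (a - 1) / (2 * x)))).
  2: { rewrite E2 -E1. rewrite Hxt. field. split; unfold x in *; lra. }
  rewrite Rabs_mult Rabs_pos_eq. 2: { apply Rdiv_le_0_compat; lra. }
  eapply Rle_trans. apply Rmult_le_compat_l. apply Rdiv_le_0_compat; lra. apply Hb.
  replace (Rpower 2 a / Gamma x * (128 * Gamma x * Rpower x (a - 3 / 2))) with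
    (128 * (Rpower 2 a * Rpower x (a - 3/2))) by (field; lra).
  rewrite E3. nra.
Qed.


Definition Gt (a : R) (t : nat) : R := if (t =? 0)%nat then 0 else rho a t.

Lemma point_bound a m t : 0 < a <= 1 -> 1 <= m ->
  let v := INR t - m in
  Rabs (Gt a t - (Rpower m a * (1 + a * (v / m) + a * (a - 1) / 2 * (v / m) ^ 2)
                  + a * (a - 1) * Rpower m (a - 1)))
  <= 10000 * Rpower m (a - 3/2) * (1 + v ^ 2 / m + v ^ 4 / m ^ 2).
Proof.
  intros Ha Hm v.
  set (r := Rpower m (/2)).
  assert (Hr : 1 <= r) by (apply rp_ge1; lra).
  assert (Hrr : r * r = m).
  { unfold r. rewrite -Rpower_plus. replace (/2 + /2) with 1 by field. apply Rpower_1; lra. }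
  set (P := Rpower m (a - 3/2)).
  assert (HP : 0 < P) by apply rp_pos.
  assert (HmA : Rpower m a = P * r ^ 3).
  { unfold P, r. simpl. rewrite Rmult_1_r -!Rpower_plus. f_equal. field. }
  assert (HmA1 : Rpower m (a - 1) = P * r).
  { unfold P, r. rewrite -!Rpower_plus. f_equal. field. }
  assert (HP4 : 1 <= P * r ^ 4).
  { replace (P * r ^ 4) with (Rpower m (a + /2)).
    apply rp_ge1; lra. unfold P, r. simpl. rewrite Rmult_1_r -!Rpower_plus. f_equal. field. }
  set (u := v / m).
  assert (Hm0 : 0 < m) by lra.
  assert (HZ : v ^ 2 / m = r ^ 2 * u ^ 2). { unfold u. rewrite -Hrr. field. lra. }
  assert (HY : v ^ 4 / m ^ 2 = r ^ 4 * u ^ 4). { unfold u. rewrite -Hrr. field. lra. }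
  rewrite HZ HY HmA HmA1.
  assert (Haa : 0 <= - (a * (a - 1)) <= 1) by nra.
  assert (Hr3 : r ^ 3 * Rabs u ^ 3 <= (r ^ 2 * u ^ 2 + r ^ 4 * u ^ 4) / 2).
  { have := amgm3 (/ r) u ltac:(apply Rinv_0_lt_compat; lra).
    intros H. apply Rmult_le_compat_l with (r := r ^ 3) in H. 2: { apply pow_le; lra. }
    replace (r ^ 3 * (/ r * u ^ 2 + u ^ 4 / / r)) with (r ^ 2 * u ^ 2 + r ^ 4 * u ^ 4) in H.
    lra. field. lra. }
  assert (Hr1 : r * Rabs u <= (1 + r ^ 2 * u ^ 2) / 2).
  { have := pow2_ge_0 (r * Rabs u - 1). replace (u ^ 2) with (Rabs u ^ 2) by (rewrite pow2_abs; auto).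
    intros; nra. }
  assert (0 <= r ^ 2 * u ^ 2) by (apply Rmult_le_pos; apply pow2_ge_0).
  assert (0 <= r ^ 4 * u ^ 4).
  { apply Rmult_le_pos. apply pow_le; lra. replace (u ^ 4) with ((u ^ 2) ^ 2) by ring. apply pow2_ge_0. }
  assert (0 <= Rabs u) by apply Rabs_pos.
  assert (HPr3 : 0 < P * r ^ 3) by (apply Rmult_lt_0_compat; auto; apply pow_lt; lra).
  unfold Gt. destruct (Nat.eqb_spec t 0) as [Ht0|Ht0].
  -
    assert (Hu : u = -1). { unfold u, v. rewrite Ht0 /=. field. lra. }
    rewrite Hu. 
    assert (0 <= 1 + a * (-1) + a * (a - 1) / 2 * (-1) ^ 2 <= 1) by nra.
    assert (r ^ 3 <= r ^ 4) by (simpl; nra).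
    assert (r <= r ^ 4) by (simpl; nra).
    set (T0 := 1 + a * (-1) + a * (a - 1) / 2 * (-1) ^ 2) in *.
    replace (r ^ 2 * (-1) ^ 2) with (r ^ 2) by ring.
    replace (r ^ 4 * (-1) ^ 4) with (r ^ 4) by ring.
    assert (0 <= P * r ^ 3 * T0 <= P * r ^ 3) by (split; nra).
    assert (0 <= - (a * (a - 1)) * (P * r) <= P * r) by (split; nra).
    assert (P * r ^ 3 <= P * r ^ 4) by nra.
    assert (P * r <= P * r ^ 4) by nra.
    assert (0 <= P * r ^ 2) by nra.
    apply Rabs_le. split; nra.
  - assert (Ht : (1 <= t)%nat) by lia.
    set (tau := INR t).
    assert (Htau : 1 <= tau) by (unfold tau; apply (le_INR 1); lia).
    have Hrho := rho_bound a t Ha Ht. fold tau in Hrho.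
    set (w := tau / m).
    assert (Hw : 0 < w) by (unfold w; apply Rdiv_lt_0_compat; lra).
    assert (Hwu : w - 1 = u) by (unfold w, u, v; fold tau; field; lra).
    assert (Htw : tau = m * w) by (unfold w; field; lra).
    have HA := pow_taylor3 a w Ha Hw. rewrite Hwu in HA.
    assert (EA : Rpower tau a = P * r ^ 3 * Rpower w a).
    { rewrite Htw rp_mult_distr; auto. rewrite HmA; auto. }
    assert (Hu3 : P * r ^ 3 * Rabs (Rpower w a - (1 + a * u + a * (a - 1) / 2 * u ^ 2))
                 <= 8 * P * (r ^ 2 * u ^ 2 + r ^ 4 * u ^ 4)).
    { apply Rle_trans with (P * r ^ 3 * (16 * Rabs u ^ 3)).
      apply Rmult_le_compat_l; lra.
      have := Rmult_le_compat_l P _ _ ltac:(lra) Hr3. intros. nra. }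
    destruct (Rle_dec (/2) w) as [Hw2|Hw2].
    + have HB1 := pow_taylor1m a w Ha Hw2. rewrite Hwu in HB1.
      have HB3 := pow_bound32 a w Ha Hw2.
      assert (EB1 : Rpower tau (a - 1) = P * r * Rpower w (a - 1)).
      { rewrite Htw rp_mult_distr; auto. rewrite HmA1; auto. }
      assert (EB3 : Rpower tau (a - 3/2) = P * Rpower w (a - 3/2)).
      { rewrite Htw rp_mult_distr; auto. }
      rewrite EA EB1 EB3 in Hrho.
      set (g := rho a t) in *.
      set (A := Rpower w a) in *. set (B1 := Rpower w (a - 1)) in *. set (B3 := Rpower w (a - 3/2)) in *.
      assert (HB1' : Rabs (a * (a - 1) * (P * r) * (B1 - 1)) <= 2 * P * (1 + r ^ 2 * u ^ 2)).
      { rewrite (Rabs_mult (a * (a - 1) * (P * r))).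
        rewrite (Rabs_mult (a * (a - 1))) (Rabs_pos_eq (P * r)); [| nra].
        rewrite (Rabs_left1 (a * (a - 1))); [| nra].
        apply Rle_trans with (1 * (P * r) * (4 * Rabs u)).
        apply Rmult_le_compat; try nra. apply Rabs_pos.
        nra. }
      assert (HE : Rabs (P * r ^ 3 * (A - (1 + a * u + a * (a - 1) / 2 * u ^ 2))) <= 8 * P * (r ^ 2 * u ^ 2 + r ^ 4 * u ^ 4)).
      { rewrite Rabs_mult (Rabs_pos_eq (P * r ^ 3)); lra. }
      assert (HR : 512 * (P * B3) <= 2048 * P).
      { nra. }
      replace (g - (P * r ^ 3 * (1 + a * u + a * (a - 1) / 2 * u ^ 2) + a * (a - 1) * (P * r)))
        with ((g - P * r ^ 3 * A - a * (a - 1) * (P * r * B1)) + P * r ^ 3 * (A - (1 + a * u + a * (a - 1) / 2 * u ^ 2))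
              + a * (a - 1) * (P * r) * (B1 - 1)) by ring.
      eapply Rle_trans. apply Rabs_triang. eapply Rle_trans. apply Rplus_le_compat_r. apply Rabs_triang.
      nra.
    + assert (Hu2 : u < - / 2) by lra.
      assert (Hu4 : 1 <= 16 * u ^ 4). { assert (1/4 <= u ^ 2) by nra. replace (u ^ 4) with ((u ^ 2) ^ 2) by ring. nra. }
      assert (HB1 : 0 < Rpower tau (a - 1) <= 1) by (split; [apply rp_pos | apply rp_le1'; lra]).
      assert (HB3 : 0 < Rpower tau (a - 3/2) <= 1) by (split; [apply rp_pos | apply rp_le1'; lra]).
      assert (HPr : P * r <= 1).
      { rewrite -HmA1. apply rp_le1'; lra. }
      assert (0 < P * r) by (apply Rmult_lt_0_compat; lra).
      rewrite EA in Hrho.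
      set (g := rho a t) in *.
      set (A := Rpower w a) in *.
      set (B1 := Rpower tau (a - 1)) in *. set (B3 := Rpower tau (a - 3/2)) in *.
      assert (HE : Rabs (P * r ^ 3 * (A - (1 + a * u + a * (a - 1) / 2 * u ^ 2))) <= 8 * P * (r ^ 2 * u ^ 2 + r ^ 4 * u ^ 4)).
      { rewrite Rabs_mult (Rabs_pos_eq (P * r ^ 3)); lra. }
      assert (HB : Rabs (a * (a - 1) * (B1 - P * r)) <= 1).
      { rewrite Rabs_mult. rewrite Rabs_left1; [|nra]. apply Rle_trans with (1 * 1).
        apply Rmult_le_compat; try lra. apply Rabs_pos. apply Rabs_le; lra. lra. }
      assert (HPY : 1 <= 16 * (P * (r ^ 4 * u ^ 4))).
      { apply Rle_trans with (16 * u ^ 4); auto. 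
        replace (16 * (P * (r ^ 4 * u ^ 4))) with (16 * u ^ 4 * (P * r ^ 4)) by ring.
        assert (0 <= 16 * u ^ 4) by lra. nra. }
      replace (g - (P * r ^ 3 * (1 + a * u + a * (a - 1) / 2 * u ^ 2) + a * (a - 1) * (P * r)))
        with ((g - P * r ^ 3 * A - a * (a - 1) * B1) + P * r ^ 3 * (A - (1 + a * u + a * (a - 1) / 2 * u ^ 2))
              + a * (a - 1) * (B1 - P * r)) by ring.
      eapply Rle_trans. apply Rabs_triang. eapply Rle_trans. apply Rplus_le_compat_r. apply Rabs_triang.
      nra.
Qed.


Lemma Ex_minus q d f g : Ex q d (fun t => f t - g t) = Ex q d f - Ex q d g.
Proof.
  rewrite (Ex_ext q d _ (fun t => f t + (-1) * g t)); [| intros; ring].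
  rewrite Ex_plus Ex_scal. ring.
Qed.

Lemma Ex_G_bound a q d : 0 < a <= 1 -> 0 < q <= 1 -> 1 <= INR d * q ->
  Rabs (Ex q d (Gt a) - Rpower (INR d * q) a * (1 + a * (a - 1) * (3 - q) / 2 / (INR d * q)))
  <= 60000 * Rpower (INR d * q) (a - 3/2).
Proof.
  intros Ha Hq Hm. set (m := INR d * q) in *.
  destruct (moments q d) as [M1 [M2 [M3 M4]]].
  fold m in M2, M3, M4.
  assert (Hm0 : 0 < m) by lra.
  set (P := Rpower m (a - 3/2)).
  assert (HP : 0 < P) by apply rp_pos.
  assert (HmA1 : Rpower m (a - 1) = Rpower m a / m).
  { replace (a - 1) with (a + -1) by ring. rewrite Rpower_plus Rpower_Ropp Rpower_1; auto. }
  set (main := fun t => Rpower m a * (1 + a * (cm q d t / m) + a * (a - 1) / 2 * (cm q d t / m) ^ 2)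
                  + a * (a - 1) * Rpower m (a - 1)).
  have Hpt : forall t, (t <= d)%nat -> Rabs (Gt a t - main t) <=
     10000 * P * (1 + (cm q d t) ^ 2 / m + (cm q d t) ^ 4 / m ^ 2).
  { intros t _. unfold main, cm. fold m. apply point_bound; auto. }
  have HE := Ex_abs q d _ _ ltac:(lra) Hpt.
  rewrite Ex_minus in HE.
  assert (Emain : Ex q d main = Rpower m a * (1 + a * (a - 1) * (3 - q) / 2 / m)).
  { rewrite (Ex_ext q d main (fun t => (Rpower m a + a * (a - 1) * Rpower m (a - 1))
        + (Rpower m a * a / m) * cm q d t + (Rpower m a * (a * (a - 1) / 2) / m ^ 2) * cm q d t ^ 2
        + 0 * cm q d t ^ 3 + 0 * cm q d t ^ 4)); [| intros t _; unfold main; field; lra].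
    rewrite Ex_poly M1 M2 HmA1. fold m. field. lra. }
  assert (Eerr : Ex q d (fun t => 10000 * P * (1 + (cm q d t) ^ 2 / m + (cm q d t) ^ 4 / m ^ 2)) <= 60000 * P).
  { rewrite (Ex_ext q d _ (fun t => 10000 * P + 0 * cm q d t + (10000 * P / m) * cm q d t ^ 2
        + 0 * cm q d t ^ 3 + (10000 * P / m ^ 2) * cm q d t ^ 4)); [| intros t _; field; lra].
    rewrite Ex_poly M2 M4. fold m.
    assert (M4b : m * (1 - q) * (1 + 3 * (INR d - 2) * q * (1 - q)) <= m + 3 * m ^ 2).
    { replace (m * (1 - q) * (1 + 3 * (INR d - 2) * q * (1 - q))) with
        (m * (1 - q) + 3 * m * (1 - q) ^ 2 * (m - 2 * q)) by (unfold m; ring).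
      assert (0 <= (1 - q) ^ 2 <= 1) by nra.
      assert (m * (1 - q) <= m) by nra.
      assert (3 * m * (1 - q) ^ 2 * (m - 2 * q) <= 3 * m ^ 2).
      { destruct (Rle_dec 0 (m - 2 * q)).
        - apply Rle_trans with (3 * m * 1 * (m - 2 * q)).
          apply Rmult_le_compat_r; auto. nra. nra.
        - assert (0 <= 3 * m * (1 - q) ^ 2) by nra. nra. }
      lra. }
    assert (10000 * P / m * (m * (1 - q)) <= 10000 * P).
    { replace (10000 * P / m * (m * (1 - q))) with (10000 * P * (1 - q)) by (field; lra). nra. }
    assert (10000 * P / m ^ 2 * (m * (1 - q) * (1 + 3 * (INR d - 2) * q * (1 - q))) <= 40000 * P).
    { apply Rle_trans with (10000 * P / m ^ 2 * (m + 3 * m ^ 2)).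
      apply Rmult_le_compat_l; auto. apply Rdiv_le_0_compat; nra.
      replace (10000 * P / m ^ 2 * (m + 3 * m ^ 2)) with (10000 * P * (1 / m + 3)) by (field; lra).
      assert (1 / m <= 1). { apply Rmult_le_reg_r with m; auto. replace (1 / m * m) with 1 by (field; lra). lra. }
      nra. }
    lra. }
  rewrite Emain in HE. lra.
Qed.


Lemma sum_to_Ex q d (F : nat -> R) : (1 <= d)%nat ->
  sum_f_R0 (fun i => h q d (S i) * F (S i)) (d - 1) = Ex q d (fun t => if (t =? 0)%nat then 0 else F t).
Proof.
  intros Hd. unfold Ex. rewrite (decomp_sum _ d); [| lia]. simpl.
  replace (Init.Nat.pred d) with (d - 1)%nat by lia. ring.
Qed.

Lemma I1q_Ex q s d : (1 <= d)%nat -> I1q q s d = Rpower q (- s) * Ex q d (Gt (s / 2)).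
Proof.
  intros Hd. unfold I1q.
  rewrite Rmult_assoc. f_equal.
  rewrite scal_sum.
  rewrite (sum_eq _ (fun i => h q d (S i) * rho (s / 2) (S i))).
  2: { intros i _. unfold rho, Rdiv. ring. }
  rewrite sum_to_Ex; auto.
Qed.

Lemma Ex_INR q d : Ex q d (fun t => INR t) = INR d * q.
Proof.
  destruct (moments q d) as [M1 _].
  rewrite (Ex_ext q d _ (fun t => cm q d t + INR d * q)); [| intros; unfold cm; ring].
  rewrite Ex_plus M1 Ex_const. ring.
Qed.

Lemma rp_sq x p : (Rpower x p) ^ 2 = Rpower x (2 * p).
Proof. simpl. rewrite Rmult_1_r -Rpower_plus. f_equal. ring. Qed.

Lemma rp_int2 q : 0 < q -> Rpower q 2 = q ^ 2.
Proof. intros. replace 2 with (INR 2) by (simpl; ring). apply Rpower_pow; auto. Qed.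

Lemma part1 q d : 0 < q <= 1 -> (1 <= d)%nat -> (sigma_bar q 2 d) ^ 2 = q / INR d.
Proof.
  intros Hq Hd.
  assert (HdR : 1 <= INR d) by (apply (le_INR 1); lia).
  unfold sigma_bar. rewrite I1q_Ex; auto.
  replace (2 / 2) with 1 by field.
  rewrite (Ex_ext q d _ (fun t => INR t)).
  2: { intros t _. unfold Gt. destruct (Nat.eqb_spec t 0) as [->|Ht]. simpl; auto.
       unfold rho. rewrite Rpower_1; try lra.
       rewrite Gamma_succ. 2: { assert (1 <= INR t) by (apply (le_INR 1); lia). lra. }
       assert (0 < Gamma (INR t / 2)). { apply Gamma_exists. assert (1 <= INR t) by (apply (le_INR 1); lia). lra. }
       field. lra. }
  rewrite Ex_INR (Rpower_Ropp q 2) rp_int2; try lra.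
  rewrite rp_sq. replace (2 * - (1 / 2)) with (- 1) by field.
  rewrite Rpower_Ropp Rpower_1.
  field. lra. apply Rmult_lt_0_compat. apply Rinv_0_lt_compat; nra. nra.
Qed.


Lemma inv_pow_taylor b z : 1 <= b -> - / 2 <= z ->
  Rabs (Rpower (1 + z) (- b) - 1 + b * z) <= b * (b + 1) * Rpower 2 (b + 2) * z ^ 2.
Proof.
  intros Hb Hz.
  have H := taylor2 (/2) (fun t => Rpower t (- b)) (fun t => - b * Rpower t (- b - 1))
    (fun t => - b * (- b - 1) * Rpower t (- b - 1 - 1)) (b * (b + 1) * Rpower 2 (b + 2)) 1 (1 + z).
  rewrite !rp_one in H.
  replace (Rpower (1 + z) (- b) - 1 + b * z) with (Rpower (1 + z) (- b) - 1 - - b * 1 * (1 + z - 1)) by ring.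
  replace (z ^ 2) with ((1 + z - 1) ^ 2) by ring.
  apply H; try lra.
  - intros t Ht. apply rp_derive; lra.
  - intros t Ht. apply rp_derive_scal; lra.
  - intros t Ht. rewrite Rabs_mult.
    rewrite Rabs_pos_eq. 2: nra.
    rewrite Rabs_pos_eq. 2: left; apply rp_pos.
    replace (- b * (- b - 1)) with (b * (b + 1)) by ring.
    apply Rmult_le_compat_l. nra.
    eapply Rle_trans. apply rp_half_bound; auto. lra.
    right; f_equal; ring.
Qed.

Definition expr (q s : R) (d : nat) : R := INR d ^ 2 *
          ((sigma_bar q s d) ^ 2 - q / INR d - (3 - q) * (2 - s) / (4 * INR d ^ 2)).

Lemma part2_bound q s : 0 < q <= 1 -> 0 < s <= 2 ->
  exists K M0, 1 <= M0 /\ forall d, M0 <= INR d * q ->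
    Rabs (expr q s d) <= K / Rpower (INR d * q) (/2).
Proof.
  intros Hq Hs.
  set (a := s / 2). set (b := 2 / s).
  assert (Ha : 0 < a <= 1) by (unfold a; lra).
  assert (Hb : 1 <= b). { unfold b. apply Rmult_le_reg_r with s; try lra. unfold Rdiv. rewrite Rmult_assoc Rinv_l; lra. }
  assert (Hab : a * b = 1) by (unfold a, b; field; lra).
  set (B := 60000).
  set (Mb := b * (b + 1) * Rpower 2 (b + 2)).
  assert (HMb : 0 <= Mb). { unfold Mb. have := rp_pos 2 (b + 2). nra. }
  exists (b * B + Mb * (1 + B) ^ 2), ((2 * (1 + B)) ^ 2).
  split. unfold B; lra.
  intros d Hd. set (m := INR d * q) in *.
  assert (Hm1 : 1 <= m) by (unfold B in Hd; lra).
  assert (HdR : 1 <= INR d) by (unfold m in Hm1; nra).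
  assert (Hd1 : (1 <= d)%nat). { apply INR_le. simpl. lra. }
  set (r := Rpower m (/2)).
  assert (Hrr : r * r = m).
  { unfold r. rewrite -Rpower_plus. replace (/2 + /2) with 1 by field. apply Rpower_1; lra. }
  assert (Hr0 : 0 < r) by apply rp_pos.
  assert (Hr : 2 * (1 + B) <= r).
  { destruct (Rle_dec (2 * (1 + B)) r); auto. exfalso.
    assert (r * r < (2 * (1 + B)) * (2 * (1 + B))) by (apply Rmult_le_0_lt_compat; lra).
    simpl in Hd. lra. }
  set (P := Rpower m (a - 3/2)).
  assert (HP : 0 < P) by apply rp_pos.
  set (mA := Rpower m a).
  assert (HmA : mA = P * r ^ 3).
  { unfold mA, P, r. simpl. rewrite Rmult_1_r -!Rpower_plus. f_equal. field. }
  assert (HmA0 : 0 < mA) by apply rp_pos.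
  set (E := Ex q d (Gt a)).
  set (c := a * (a - 1) * (3 - q) / 2).
  assert (Hc : Rabs c <= 1).
  { unfold c. clearbody a. have := pow2_ge_0 (a - 1/2). intros.
    assert (-1/4 <= a * (a - 1) <= 0) by nra. set (p := a * (a - 1)) in *.
    assert (0 <= (p + 1/4) * (3 - q)) by (apply Rmult_le_pos; lra).
    assert (p * (3 - q) <= 0) by (apply Rmult_le_0_r; lra).
    apply Rabs_le. split; lra. }
  have HE := Ex_G_bound a q d Ha Hq Hm1. fold m E mA P in HE.
  replace (a * (a - 1) * (3 - q) / 2) with c in HE by reflexivity.
  set (z := E / mA - 1).
  assert (Hz1 : Rabs (z - c / m) <= B / r ^ 3).
  { replace (z - c / m) with ((E - mA * (1 + c / m)) / mA) by (unfold z; field; lra).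
    rewrite Rabs_div; [| lra]. rewrite (Rabs_pos_eq mA); [| lra].
    apply Rmult_le_reg_r with mA; auto.
    replace (Rabs (E - mA * (1 + c / m)) / mA * mA) with (Rabs (E - mA * (1 + c / m))) by (field; lra).
    replace (B / r ^ 3 * mA) with (B * P) by (rewrite HmA; field; lra).
    unfold B in *; lra. }
  assert (Hcm : Rabs (c / m) <= 1 / r ^ 2).
  { rewrite Rabs_div; [| lra]. rewrite (Rabs_pos_eq m); [| lra].
    rewrite -Hrr. apply Rmult_le_reg_r with (r * r); [nra|].
    replace (Rabs c / (r * r) * (r * r)) with (Rabs c) by (field; lra).
    replace (1 / r ^ 2 * (r * r)) with 1 by (field; lra). lra. }
  assert (HBr : B / r ^ 3 <= B / r ^ 2).
  { apply Rmult_le_compat_l. unfold B; lra. apply Rinv_le_contravar. nra. simpl. nra. }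
  assert (Hzb : Rabs z <= (1 + B) / r ^ 2).
  { replace z with ((z - c / m) + c / m) by ring.
    eapply Rle_trans. apply Rabs_triang.
    replace ((1 + B) / r ^ 2) with (B / r ^ 2 + 1 / r ^ 2) by (field; lra). lra. }
  assert (Hz2 : Rabs z <= / 2).
  { eapply Rle_trans. apply Hzb. apply Rmult_le_reg_r with (r ^ 2). nra.
    replace ((1 + B) / r ^ 2 * r ^ 2) with (1 + B) by (field; lra).
    unfold B in *. nra. }
  assert (Hz3 : - / 2 <= z) by (have := Rabs_le_between' z 0 (/ 2); have := Rle_abs (- z); rewrite Rabs_Ropp; lra).
  have HT := inv_pow_taylor b z Hb Hz3. fold Mb in HT.
  assert (HEpos : 0 < E) by (unfold z in Hz3; have := Rmult_lt_compat_r mA _ _ HmA0 (ltac:(lra) : 0 < E / mA); replace (E / mA * mA) with E by (field; lra); lra).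
  assert (Hsig : (sigma_bar q s d) ^ 2 = q ^ 2 / m * Rpower (1 + z) (- b)).
  { unfold sigma_bar. rewrite I1q_Ex; auto. fold a E.
    rewrite rp_sq. replace (2 * - (1 / s)) with (- b) by (unfold b; field; lra).
    replace E with (mA * (1 + z)) by (unfold z; field; lra).
    rewrite !rp_mult_distr; try (apply rp_pos); try lra.
    2: { apply Rmult_lt_0_compat; lra. }
    rewrite Rpower_mult. replace (- s * - b) with (INR 2) by (unfold b; simpl; field; lra).
    rewrite Rpower_pow; [| lra].
    unfold mA. rewrite Rpower_mult. replace (a * - b) with (- 1) by lra.
    rewrite (Rpower_Ropp m 1) (Rpower_1 m); [| lra]. field. lra. }
  assert (Hexpr : expr q s d = - b * m * (z - c / m) + m * (Rpower (1 + z) (- b) - 1 + b * z)).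
  { unfold expr. rewrite Hsig. unfold m, c, a, b. field. split; lra. }
  rewrite Hexpr. fold r.
  eapply Rle_trans. apply Rabs_triang.

  rewrite (Rabs_mult (- b * m) (z - c / m)) (Rabs_mult (- b) m) (Rabs_mult m).
  rewrite (Rabs_left (- b)); [|lra]. rewrite (Rabs_pos_eq m); [|lra].
  assert (T1 : - - b * m * Rabs (z - c / m) <= b * B / r).
  { apply Rle_trans with (b * m * (B / r ^ 3)). replace (- - b) with b by ring.
    apply Rmult_le_compat_l; auto. nra.
    rewrite -Hrr. replace (b * (r * r) * (B / r ^ 3)) with (b * B / r) by (field; lra). lra. }
  assert (T2 : m * Rabs (Rpower (1 + z) (- b) - 1 + b * z) <= Mb * (1 + B) ^ 2 / r).
  { apply Rle_trans with (m * (Mb * z ^ 2)). apply Rmult_le_compat_l; lra.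
    assert (z ^ 2 <= ((1 + B) / r ^ 2) ^ 2).
    { rewrite -pow2_abs. apply pow_maj_Rabs. rewrite Rabs_Rabsolu. auto. }
    apply Rle_trans with (m * (Mb * ((1 + B) / r ^ 2) ^ 2)).
    apply Rmult_le_compat_l. lra. apply Rmult_le_compat_l; auto.
    rewrite -Hrr. replace ((r * r) * (Mb * ((1 + B) / r ^ 2) ^ 2)) with (Mb * (1 + B) ^ 2 / r * / r) by (field; lra).
    assert (0 <= Mb * (1 + B) ^ 2 / r). { apply Rdiv_le_0_compat; [|lra]. apply Rmult_le_pos; auto. apply pow2_ge_0. }
    assert (/ r <= 1). { rewrite -Rinv_1. apply Rinv_le_contravar; unfold B in *; lra. }
    nra. }
  replace ((b * B + Mb * (1 + B) ^ 2) / r) with (b * B / r + Mb * (1 + B) ^ 2 / r) by (field; lra).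
  lra.
Qed.


Lemma part2 q s : 0 < q <= 1 -> 0 < s <= 2 -> is_lim_seq (expr q s) 0.
Proof.
  intros Hq Hs.
  destruct (part2_bound q s Hq Hs) as [K [M0 [HM0 Hb]]].
  apply is_lim_seq_spec. intros eps.
  have He := cond_pos eps.
  destruct (INR_unbounded ((M0 + (K / eps) ^ 2) / q)) as [N HN].
  exists N. intros n Hn.
  assert (HnN : INR N <= INR n) by (apply le_INR; lia).
  set (m := INR n * q).
  assert (HK2 : 0 <= (K / eps) ^ 2) by apply pow2_ge_0.
  assert (Hm : M0 + (K / eps) ^ 2 < m).
  { unfold m. apply Rlt_le_trans with (INR N * q).
    apply Rmult_lt_reg_r with (/ q). apply Rinv_0_lt_compat; lra.
    replace (INR N * q * / q) with (INR N) by (field; lra). unfold Rdiv in HN. lra.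
    apply Rmult_le_compat_r; lra. }
  have Hbd := Hb n ltac:(unfold m in Hm; lra). fold m in Hbd.
  set (r := Rpower m (/2)) in *.
  assert (Hrr : r * r = m).
  { unfold r. rewrite -Rpower_plus. replace (/2 + /2) with 1 by field. apply Rpower_1; lra. }
  assert (Hr0 : 0 < r) by apply rp_pos.
  assert (Hr : K / eps < r).
  { destruct (Rlt_dec (K / eps) r); auto. exfalso.
    destruct (Rle_dec 0 (K / eps)).
    - assert (r * r <= (K / eps) * (K / eps)) by (apply Rmult_le_compat; lra). simpl in Hm. lra.
    - lra. }
  rewrite Rminus_0_r. eapply Rle_lt_trans. apply Hbd.
  apply Rmult_lt_reg_r with r; auto.
  replace (K / r * r) with K by (field; lra).
  apply Rmult_lt_reg_r with (/ eps). apply Rinv_0_lt_compat; lra.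
  replace (eps * r * / eps) with r by (field; lra). exact Hr.
Qed.

Theorem mainTheorem13 (q : R) (hq : 0 < q <= 1) :
  (forall d : nat, (1 <= d)%nat -> (sigma_bar q 2 d) ^ 2 = q / INR d) /\
  (forall s : R, 0 < s <= 2 ->
     is_lim_seq
       (fun d : nat => INR d ^ 2 *
          ((sigma_bar q s d) ^ 2 - q / INR d
           - (3 - q) * (2 - s) / (4 * INR d ^ 2)))
       0).
Proof.
  split.
  - intros d Hd. apply part1; auto.
  - intros s Hs. exact (part2 q s hq Hs).
Qed.
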